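(* Let $(G,\cdot)$ be a loop with identity $e$ and let $(H,\cdot)$ be a non-trivial subloop of $G$ such that $(xs\cdot z)s=x(sz\cdot s)$ for all $x,z\in G$ and $s\in H$. Then $$xs^m\cdot s^n=xs^{m+n}$$ for all $x\in G$, $s\in H$ and $m,n\in\mathbb{Z}$.
   Context: Juxtaposition binds more tightly than $\cdot$. For $s\in H$, the left and right inverses of $s$ coincide under the hypothesis; denote this common inverse by $s^{-1}$. Powers of $s\in H$ are defined by $s^0=e$, $s^n=s^{n-1}\cdot s$ for $n>0$, and $s^n=(s^{-1})^{|n|}$ for $n<0$. *)

(* Defs.v *)
(* Loops are given equationally: a binary operation with
   identity e and left/right divisions. *)
From Stdlib Require Import ZArith.

Section Loops.
Variables (G : Type) (mul ldiv rdiv : G -> G -> G) (e : G).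

Definition is_loop : Prop :=
  (forall x, mul e x = x) /\ (forall x, mul x e = x) /\
  (forall a b, mul a (ldiv a b) = b) /\ (forall a b, ldiv a (mul a b) = b) /\
  (forall a b, mul (rdiv b a) a = b) /\ (forall a b, rdiv (mul b a) a = b).

Definition is_subloop (H : G -> Prop) : Prop :=
  H e /\ (forall a b, H a -> H b -> H (mul a b)) /\
  (forall a b, H a -> H b -> H (ldiv a b)) /\
  (forall a b, H a -> H b -> H (rdiv a b)).

Definition nontrivial (H : G -> Prop) : Prop := exists s, H s /\ s <> e.

(* The (right) inverse of s: the unique t with s t = e. *)
Definition linv (s : G) : G := ldiv s e.

Fixpoint npow (s : G) (n : nat) : G :=
  match n with O => e | S k => mul (npow s k) s end.

Definition zpow (s : G) (n : Z) : G :=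
  match n with
  | Z0 => e
  | Zpos p => npow s (Pos.to_nat p)
  | Zneg p => npow (linv s) (Pos.to_nat p)
  end.
End Loops.

(* Main.v *)
Require Import Defs.
From Stdlib Require Import ZArith Lia.

Section Aux.
Variables (G : Type) (f g : G -> G).
Hypothesis fg : forall y, f (g y) = y.
Hypothesis gf : forall y, g (f y) = y.

Definition D (a b : nat) (x : G) := Nat.iter a f (Nat.iter b g x).

Lemma D_cancel a b x : D (S a) (S b) x = D a b x.
Proof. unfold D. rewrite Nat.iter_succ_r, Nat.iter_succ, fg. reflexivity. Qed.

Lemma D_shift a b d x : D (a + d) (b + d) x = D a b x.
Proof.
  induction d. now rewrite !Nat.add_0_r.
  rewrite !Nat.add_succ_r, D_cancel. exact IHd.
Qed.

Lemma D_eq a b c d x : a + d = c + b -> D a b x = D c d x.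
Proof.
  intros Hx. rewrite <- (D_shift a b d), Hx, <- (D_shift c d b).
  now rewrite (Nat.add_comm d b).
Qed.

Lemma f_iter_g b y : f (Nat.iter b g y) = Nat.iter b g (f y).
Proof.
  induction b; simpl. reflexivity.
  rewrite fg, <- IHb, gf. reflexivity.
Qed.

Lemma iterf_iterg a b y : Nat.iter a f (Nat.iter b g y) = Nat.iter b g (Nat.iter a f y).
Proof.
  induction a; simpl. reflexivity.
  rewrite IHa, f_iter_g. reflexivity.
Qed.

Lemma D_comp a b c d x : D a b (D c d x) = D (a + c) (b + d) x.
Proof.
  unfold D. rewrite <- (iterf_iterg c b), !Nat.iter_add. reflexivity.
Qed.

Definition Zit (k : Z) (x : G) := D (Z.to_nat k) (Z.to_nat (- k)) x.

Lemma Zit_comp m n x : Zit n (Zit m x) = Zit (m + n) x.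
Proof.
  unfold Zit. rewrite D_comp. apply D_eq. lia.
Qed.
End Aux.

Theorem theorem3p3 (G : Type) (mul ldiv rdiv : G -> G -> G) (e : G)
  (H : G -> Prop) :
  is_loop G mul ldiv rdiv e ->
  is_subloop G mul ldiv rdiv e H ->
  nontrivial G e H ->
  (forall x z s, H s -> mul (mul (mul x s) z) s = mul x (mul (mul s z) s)) ->
  forall (x s : G) (m n : Z), H s ->
    mul (mul x (zpow G mul ldiv e s m)) (zpow G mul ldiv e s n)
    = mul x (zpow G mul ldiv e s (m + n)).
Proof.
  intros [le [re [ld1 [ld2 [rd1 rd2]]]]] [He [Hm [Hl Hr]]] _ Bol.
  assert (Pow : forall s, H s -> forall n x,
    mul x (npow G mul e s n) = Nat.iter n (fun y => mul y s) x).
  { intros s Hs.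
    assert (forall n, (forall x, mul x (npow G mul e s n) = Nat.iter n (fun y => mul y s) x)
       /\ (forall x, mul x (npow G mul e s (S n)) = Nat.iter (S n) (fun y => mul y s) x)).
    { induction n as [|n [IH1 IH2]].
      - split; intros x; simpl; [apply re| rewrite le; reflexivity].
      - split; [exact IH2|]. intros x.
        assert (E : npow G mul e s (S n) = mul s (npow G mul e s n)).
        { rewrite <- (le (npow G mul e s (S n))), IH2, Nat.iter_succ_r, le, IH1.
          reflexivity. }
        change (npow G mul e s (S (S n))) with (mul (npow G mul e s (S n)) s).
        rewrite E, <- Bol by exact Hs. rewrite IH1.
        rewrite (Nat.iter_succ_r (S n)), Nat.iter_succ. reflexivity. }
    intros n; apply H0. }
  intros x s m n Hs.
  set (t := linv G ldiv e s).
  assert (Ht : H t) by (apply Hl; auto).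
  assert (st : mul s t = e) by apply ld1.
  assert (gf : forall y, mul (mul y s) t = y).
  { intros y. transitivity (rdiv (mul (mul (mul y s) t) s) s); [symmetry; apply rd2|].
    rewrite Bol by exact Hs. rewrite st, le, rd2. reflexivity. }
  assert (fg : forall y, mul (mul y t) s = y).
  { intros y. pose proof (gf (rdiv y s)) as K. rewrite rd1 in K. rewrite K. apply rd1. }
  assert (Z : forall k y, mul y (zpow G mul ldiv e s k)
             = Zit G (fun y => mul y s) (fun y => mul y t) k y).
  { intros k y. unfold Zit, D. destruct k; simpl.
    - apply re.
    - apply Pow; auto.
    - apply Pow; auto. }
  rewrite !Z. apply Zit_comp; auto.
Qed.
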